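(* For all integers $n\ge1$ and real numbers $a\ge1$, $x,y\in(0,\pi)$: if $n$ is odd then $\Theta^*_{n,a}(x,y)\ge\sin(x)\sin(y)$, with equality if and only if $n=1$; if $n$ is even then $\Theta^*_{n,a}(x,y)\ge 2\sin(x)\sin(y)$, with equality if and only if $n=2$, $a=1$.
   Context: For a real number $a$ and integers $0\le m$, $\binom{m+a}{m}=\frac{(a+1)(a+2)\cdots(a+m)}{m!}$ (equal to $1$ when $m=0$). For an integer $n\ge1$, $\Theta^*_{n,a}(x,y)=\sum_{1\le j\le n,\ j\text{ odd}}\binom{n+a-j}{n-j}\frac{\sin(jx)\sin(jy)}{j}$. *)

(* Defs.v *)
From Stdlib Require Import Reals Lra Lia Factorial.
Open Scope R_scope.

(* Generalized binomial coefficient binom(m+a, m) = (a+1)(a+2)...(a+m)/m!,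
   equal to 1 when m = 0. *)
Fixpoint rising_prod (a : R) (m : nat) : R :=
  match m with
  | O => 1
  | S k => rising_prod a k * (a + INR (S k))
  end.

Definition gbinom (m : nat) (a : R) : R := rising_prod a m / INR (fact m).

Definition theta_term (n : nat) (a x y : R) (j : nat) : R :=
  if Nat.odd j then
    gbinom (n - j) a * (sin (INR j * x) * sin (INR j * y)) / INR j
  else 0.

Definition ThetaStar (n : nat) (a x y : R) : R :=
  sum_f 1 n (theta_term n a x y).

(* Main.v *)
Require Import Defs.
From Stdlib Require Import Reals Lra Lia Factorial.
From Coquelicot Require Import Coquelicot.
Open Scope R_scope.

Fixpoint sm (f : nat -> R) (n : nat) : R :=
  match n with O => 0 | S k => sm f k + f (S k) end.

Lemma sm_ext f g n : (forall j, (1 <= j <= n)%nat -> f j = g j) -> sm f n = sm g n.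
Proof.
  induction n as [|n IH]; intros H; simpl; auto.
  rewrite IH by (intros; apply H; lia). rewrite H by lia. reflexivity.
Qed.

Lemma sum_f_sm0 k f : sum_f_R0 (fun x => f (x + 1)%nat) k = sm f (S k).
Proof.
  induction k as [|k IH]; simpl sum_f_R0. - simpl. ring.
  - rewrite IH. cbn [sm]. replace (k + 1)%nat with (S k) by lia. reflexivity.
Qed.

Lemma sum_f_sm n f : (1 <= n)%nat -> sum_f 1 n f = sm f n.
Proof.
  intros Hn. unfold sum_f. rewrite sum_f_sm0. f_equal. lia.
Qed.

Lemma sm_S f n : sm f (S n) = sm f n + f (S n).
Proof. reflexivity. Qed.

Definition hs (t:R) (j:nat) := if Nat.odd j then sin (INR j * t) else 0.
Definition hc (t:R) (j:nat) := if Nat.odd j then cos (INR j * t) / INR j else 0.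

Lemma odd_dbl k : Nat.odd (k + k) = false.
Proof. rewrite Nat.odd_add. destruct (Nat.odd k); reflexivity. Qed.

Lemma sin_sq_diff A B : sin A ^ 2 - sin B ^ 2 = sin (A + B) * sin (A - B).
Proof.
  rewrite sin_plus, sin_minus.
  pose proof (sin2_cos2 A). pose proof (sin2_cos2 B). unfold Rsqr in *. nra.
Qed.

Lemma hs_id k t : sin t * sm (hs t) (k+k) = sin (INR k * t) ^ 2 /\
                  sin t * sm (hs t) (S (k+k)) = sin (INR (S k) * t) ^ 2.
Proof.
  induction k as [|k [IH1 IH2]].
  - simpl. unfold hs. simpl. rewrite Rmult_0_l, Rmult_1_l, sin_0. split; ring.
  - assert (E1 : sin t * sm (hs t) (S k + S k) = sin (INR (S k) * t) ^ 2).
    { replace (S k + S k)%nat with (S (S (k + k))) by lia. rewrite sm_S.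
      unfold hs at 2. replace (Nat.odd (S (S (k+k)))) with false.
      2:{ symmetry. replace (S (S (k+k))) with ((S k) + (S k))%nat by lia. apply odd_dbl. }
      rewrite Rplus_0_r. exact IH2. }
    split; [exact E1|].
    replace (S (S k + S k)) with (S (S k + S k))%nat by reflexivity.
    rewrite sm_S, Rmult_plus_distr_l, E1.
    unfold hs. replace (Nat.odd (S (S k + S k))) with true.
    2:{ symmetry. replace (S (S k + S k)) with (1 + (S k + S k))%nat by lia.
        rewrite Nat.odd_add, odd_dbl. reflexivity. }
    assert (H := sin_sq_diff (INR (S (S k)) * t) (INR (S k) * t)).
    replace (INR (S (S k)) * t + INR (S k) * t) with (INR (S (S k + S k)) * t) in H.
    2:{ rewrite !S_INR, plus_INR, !S_INR. ring. }
    replace (INR (S (S k)) * t - INR (S k) * t) with t in H.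
    2:{ rewrite !S_INR. ring. }
    lra.
Qed.

Lemma hs_nonneg m t : 0 < t < PI -> 0 <= sm (hs t) m.
Proof.
  intros Ht. pose proof (sin_gt_0 t (proj1 Ht) (proj2 Ht)).
  destruct (Nat.Even_or_Odd m) as [[k Hk]|[k Hk]].
  - replace m with (k+k)%nat by lia. destruct (hs_id k t) as [H1 _].
    assert (0 <= sin (INR k * t) ^ 2) by (apply pow2_ge_0). nra.
  - replace m with (S (k+k))%nat by lia. destruct (hs_id k t) as [_ H1].
    assert (0 <= sin (INR (S k) * t) ^ 2) by (apply pow2_ge_0). nra.
Qed.

Lemma hc_deriv m t : is_derive (fun t => sm (hc t) m) t (- sm (hs t) m).
Proof.
  induction m as [|m IH].
  - cbn [sm]. replace (-0) with 0 by ring. apply is_derive_Reals. apply derivable_pt_lim_const.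
  - cbn [sm]. replace (- (sm (hs t) m + hs t (S m))) with (- sm (hs t) m + - hs t (S m)) by ring.
    apply (is_derive_plus (fun t => sm (hc t) m) (fun t => hc t (S m))); [exact IH|].
    unfold hc, hs. destruct (Nat.odd (S m)).
    + assert (INR (S m) <> 0) by (apply not_0_INR; lia).
      set (r := INR (S m)) in *. clearbody r. auto_derive; [exact I|]. field. exact H.
    + apply is_derive_Reals. replace (-0) with 0 by ring. apply derivable_pt_lim_const.
Qed.

Lemma hc_mono m a b : 0 <= a -> a <= b -> b <= PI -> sm (hc b) m <= sm (hc a) m.
Proof.
  intros Ha Hab Hb. destruct (Req_dec a b) as [->|Hne]; [lra|].
  destruct (MVT_cor2 (fun t => sm (hc t) m) (fun t => - sm (hs t) m) a b) as [c [Hc1 Hc2]].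
  - lra.
  - intros c Hc. apply is_derive_Reals. apply hc_deriv.
  - assert (0 <= sm (hs c) m) by (apply hs_nonneg; lra). nra.
Qed.

Lemma hc_even m t : sm (hc (- t)) m = sm (hc t) m.
Proof.
  apply sm_ext. intros j _. unfold hc. destruct (Nat.odd j); [|reflexivity].
  replace (INR j * - t) with (- (INR j * t)) by ring. rewrite cos_neg. reflexivity.
Qed.

Lemma hc_per m t : sm (hc (2 * PI - t)) m = sm (hc t) m.
Proof.
  apply sm_ext. intros j _. unfold hc. destruct (Nat.odd j); [|reflexivity].
  replace (INR j * (2 * PI - t)) with (- (INR j * t) + 2 * INR j * PI) by ring.
  rewrite cos_period, cos_neg. reflexivity.
Qed.

Definition tt (x y : R) (j : nat) :=
  if Nat.odd j then sin (INR j * x) * sin (INR j * y) / INR j else 0.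

Lemma tt_hc m x y : sm (tt x y) m = (sm (hc (x - y)) m - sm (hc (x + y)) m) / 2.
Proof.
  induction m as [|m IH]; cbn [sm]; [field|]. rewrite IH.
  unfold tt, hc. destruct (Nat.odd (S m)) eqn:E; [|field].
  assert (INR (S m) <> 0) by (apply not_0_INR; lia).
  replace (INR (S m) * (x - y)) with (INR (S m) * x - INR (S m) * y) by ring.
  replace (INR (S m) * (x + y)) with (INR (S m) * x + INR (S m) * y) by ring.
  rewrite cos_minus, cos_plus. field. exact H.
Qed.

Lemma tt_nonneg m x y : 0 < x < PI -> 0 < y < PI -> 0 <= sm (tt x y) m.
Proof.
  intros Hx Hy. rewrite tt_hc.
  assert (E : sm (hc (x - y)) m = sm (hc (Rabs (x - y))) m).
  { unfold Rabs. destruct (Rcase_abs (x - y)); [|reflexivity]. rewrite hc_even. reflexivity. }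
  assert (0 <= Rabs (x - y)) by apply Rabs_pos.
  assert (Rabs (x - y) <= Rmin (x + y) (2*PI - (x+y))).
  { unfold Rabs, Rmin. destruct (Rcase_abs (x-y)), (Rle_dec (x+y) (2*PI - (x+y))); lra. }
  destruct (Rle_dec (x + y) PI).
  - assert (sm (hc (x + y)) m <= sm (hc (Rabs (x-y))) m).
    { apply hc_mono; auto. unfold Rmin in *. destruct (Rle_dec (x+y) (2*PI-(x+y))); lra. }
    lra.
  - rewrite <- (hc_per m (x + y)).
    assert (sm (hc (2*PI - (x + y))) m <= sm (hc (Rabs (x-y))) m).
    { apply hc_mono; auto; unfold Rmin in *; destruct (Rle_dec (x+y) (2*PI-(x+y))); lra. }
    lra.
Qed.

Lemma sm_mono f k n : (k <= n)%nat -> (forall j, (k < j <= n)%nat -> 0 <= f j) -> sm f k <= sm f n.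
Proof.
  intros Hk Hf. induction n as [|n IH].
  - replace k with 0%nat by lia. lra.
  - destruct (Nat.eq_dec k (S n)) as [->|Hne]; [lra|].
    rewrite sm_S. assert (0 <= f (S n)) by (apply Hf; lia).
    assert (sm f k <= sm f n) by (apply IH; [lia| intros; apply Hf; lia]). lra.
Qed.

Definition dd (c : nat -> R) (k : nat) : R :=
  match k with O => c O | S k' => c (S k') - c k' end.

Lemma abel n : forall (c t : nat -> R),
  sm (fun j => c (n - j)%nat * t j) n = sm (fun m => dd c (n - m)%nat * sm t m) n.
Proof.
  induction n as [|n IH]; intros c t; [reflexivity|].
  destruct n as [|n].
  - simpl. ring.
  - rewrite sm_S.
    rewrite (sm_ext (fun j => c (S (S n) - j)%nat * t j) (fun j => (fun k => c (S k)) (S n - j)%nat * t j))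
      by (intros j Hj; replace (S (S n) - j)%nat with (S (S n - j)) by lia; reflexivity).
    rewrite (IH (fun k => c (S k)) t). rewrite sm_S. rewrite (sm_S (fun m => dd c (S (S n) - m) * sm t m)).
    rewrite (sm_ext (fun m => dd (fun k => c (S k)) (S n - m) * sm t m) (fun m => dd c (S (S n) - m) * sm t m)).
    2:{ intros j Hj. replace (S n - j)%nat with (S (n - j)) by lia.
        replace (S (S n) - j)%nat with (S (S (n - j))) by lia. reflexivity. }
    rewrite !Nat.sub_diag.
    rewrite (sm_S (fun m => dd c (S (S n) - m) * sm t m) n).
    replace (S (S n) - S n)%nat with 1%nat by lia.
    cbn [dd]. rewrite (sm_S t (S n)). ring.
Qed.

Lemma rp_shift a k : rising_prod (a - 1) (S k) = a * rising_prod a k.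
Proof.
  induction k as [|k IH].
  - simpl. ring.
  - change (rising_prod (a - 1) (S (S k))) with (rising_prod (a - 1) (S k) * (a - 1 + INR (S (S k)))).
    rewrite IH. change (rising_prod a (S k)) with (rising_prod a k * (a + INR (S k))).
    rewrite (S_INR (S k)). ring.
Qed.

Lemma pascal a k : gbinom (S k) a - gbinom k a = gbinom (S k) (a - 1).
Proof.
  unfold gbinom. rewrite rp_shift.
  change (rising_prod a (S k)) with (rising_prod a k * (a + INR (S k))).
  rewrite fact_simpl, mult_INR.
  assert (INR (fact k) <> 0) by apply INR_fact_neq_0.
  assert (INR (S k) <> 0) by (apply not_0_INR; lia).
  field. split; assumption.
Qed.

Lemma rp_ge b m : 0 <= b -> INR (fact m) <= rising_prod b m.
Proof.
  intros Hb. induction m as [|m IH]; [simpl; lra|].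
  change (rising_prod b (S m)) with (rising_prod b m * (b + INR (S m))).
  rewrite fact_simpl, mult_INR.
  assert (0 < INR (fact m)) by (apply lt_0_INR, lt_O_fact).
  assert (0 <= INR (S m)) by apply pos_INR. nra.
Qed.

Lemma gbinom_ge1 b m : 0 <= b -> 1 <= gbinom m b.
Proof.
  intros Hb. unfold gbinom. assert (0 < INR (fact m)) by (apply lt_0_INR, lt_O_fact).
  pose proof (rp_ge b m Hb).
  apply Rmult_le_reg_r with (INR (fact m)); [lra|]. unfold Rdiv.
  rewrite Rmult_assoc, Rinv_l by lra. lra.
Qed.

Lemma gbinom0 a : gbinom 0 a = 1.
Proof. unfold gbinom. simpl. field. Qed.

Lemma dd_ge1 a k : 1 <= a -> 1 <= dd (fun k => gbinom k a) k.
Proof.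
  intros Ha. destruct k as [|k]; simpl dd.
  - rewrite gbinom0; lra.
  - rewrite pascal. apply gbinom_ge1. lra.
Qed.

Lemma sin3 x : sin (3 * x) = sin x * (3 - 4 * sin x ^ 2).
Proof.
  replace (3 * x) with (2 * x + x) by ring.
  rewrite sin_plus, sin_2a, cos_2a_sin.
  pose proof (sin2_cos2 x). unfold Rsqr in *.
  replace (2 * sin x * cos x * cos x) with (2 * sin x * (cos x * cos x)) by ring.
  replace (cos x * cos x) with (1 - sin x * sin x) by lra. ring.
Qed.

Lemma T1 x y : sm (tt x y) 1 = sin x * sin y.
Proof. unfold tt. simpl. rewrite !Rmult_1_l. field. Qed.

Lemma T2 x y : sm (tt x y) 2 = sin x * sin y.
Proof. rewrite sm_S, T1. unfold tt. simpl. ring. Qed.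

Lemma T3 x y : 0 < x < PI -> 0 < y < PI -> 0 < sm (tt x y) 3.
Proof.
  intros Hx Hy. rewrite sm_S, T2. unfold tt.
  replace (Nat.odd 3) with true by reflexivity.
  replace (INR 3) with 3 by (simpl; ring).
  rewrite !sin3.
  pose proof (sin_gt_0 x (proj1 Hx) (proj2 Hx)).
  pose proof (sin_gt_0 y (proj1 Hy) (proj2 Hy)).
  pose proof (SIN_bound x). pose proof (SIN_bound y).
  set (p := 3 - 4 * sin x ^ 2). set (q := 3 - 4 * sin y ^ 2).
  assert (-1 <= p < 3) by (unfold p; nra).
  assert (-1 <= q < 3) by (unfold q; nra).
  assert (p * q > -3).
  { destruct (Rle_dec 0 p); destruct (Rle_dec 0 q); nra. }
  assert (0 < sin x * sin y) by nra.
  replace (sin x * sin y + sin x * p * (sin y * q) / 3) with (sin x * sin y * (1 + p * q / 3)) by field.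
  nra.
Qed.

Lemma theta_eq n a x y : (1 <= n)%nat ->
  ThetaStar n a x y = sm (fun m => dd (fun k => gbinom k a) (n - m) * sm (tt x y) m) n.
Proof.
  intros Hn. unfold ThetaStar. rewrite sum_f_sm by exact Hn.
  rewrite <- (abel n (fun k => gbinom k a) (tt x y)).
  apply sm_ext. intros j _. unfold theta_term, tt. destruct (Nat.odd j); [unfold Rdiv; ring|ring].
Qed.

Theorem theorem3p9 (n : nat) (a x y : R) :
  (1 <= n)%nat -> 1 <= a -> 0 < x < PI -> 0 < y < PI ->
  (Nat.odd n = true ->
     ThetaStar n a x y >= sin x * sin y /\
     (ThetaStar n a x y = sin x * sin y <-> n = 1%nat)) /\
  (Nat.even n = true ->
     ThetaStar n a x y >= 2 * sin x * sin y /\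
     (ThetaStar n a x y = 2 * sin x * sin y <-> (n = 2%nat /\ a = 1))).
Proof.
  intros Hn Ha Hx Hy. rewrite (theta_eq n a x y Hn).
  pose proof (sin_gt_0 x (proj1 Hx) (proj2 Hx)).
  pose proof (sin_gt_0 y (proj1 Hy) (proj2 Hy)).
  assert (Hs : 0 < sin x * sin y) by nra.
  set (c := fun k => gbinom k a).
  assert (E1 : tt x y 1 = sin x * sin y) by (pose proof (T1 x y) as E; cbn [sm] in E; lra).
  assert (E2 : tt x y 2 = 0) by (pose proof (T2 x y) as E; cbn [sm] in E; lra).
  assert (E3 : 0 < tt x y 1 + tt x y 3) by (pose proof (T3 x y Hx Hy) as E; cbn [sm] in E; lra).
  destruct n as [|[|[|n]]]; [lia| | |].
  - cbn [sm]. replace (1 - 1)%nat with 0%nat by lia. cbn [dd]. unfold c. rewrite gbinom0, E1.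
    split; intros Hp.
    + split; [lra|]. split; intros; [reflexivity|lra].
    + simpl in Hp; discriminate Hp.
  - cbn [sm]. replace (2 - 1)%nat with 1%nat by lia. replace (2 - 2)%nat with 0%nat by lia.
    rewrite E1, E2. cbn [dd]. unfold c. rewrite gbinom0.
    assert (E : gbinom 1 a = a + 1) by (unfold gbinom; simpl; field).
    rewrite E. split; intros Hp.
    + simpl in Hp; discriminate Hp.
    + split; [nra|]. split.
      * intros H2. split; [reflexivity|]. nra.
      * intros [_ ->]. ring.
  - set (N := S (S (S n))).
    set (g := fun m => dd c (N - m) * sm (tt x y) m).
    assert (Hge : sm g 3 <= sm g N).
    { apply sm_mono; [unfold N; lia|]. intros j Hj. unfold g.
      pose proof (dd_ge1 a (N - j) Ha). pose proof (tt_nonneg j x y Hx Hy). unfold c. nra. }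
    assert (H3 : 2 * (sin x * sin y) < sm g 3).
    { cbn [sm]. unfold g. cbn [sm]. rewrite E2.
      pose proof (dd_ge1 a (N - 1) Ha). pose proof (dd_ge1 a (N - 2) Ha).
      pose proof (dd_ge1 a (N - 3) Ha). unfold c in *. nra. }
    split; intros _.
    + split; [lra|]. split; [lra|]. unfold N; intros; lia.
    + split; [lra|]. split; [lra|]. unfold N; intros [? _]; lia.
Qed.
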